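(* Consider the randomized gossip model described in the context. If disagreement divergence is achieved almost surely (for some initial value), then $\prod_{k=0}^\infty (1+2S_k)=\infty$.
   Context: Network with node set $\mathcal V=\{1,\dots,n\}$, $n\ge 3$. Let $A=[a_{ij}]$ be an $n\times n$ stochastic matrix. At each time $k=0,1,2,\dots$, independently of the past and of node states, a node $i$ is drawn with probability $1/n$ and then the pair $(i,j)$ is selected with probability $a_{ij}$. Given that pair $(i,j)$ is selected at time $k$, independently of time, node states and pair selection, node $i$: with probability $\alpha$ (event $\mathscr A_{ij}(k)$) sets $x_i(k+1)=(1-T_k)x_i(k)+T_kx_j(k)$, $0<T_k\le1$; with probability $\beta$ (event $\mathscr N_{ij}(k)$) sets $x_i(k+1)=x_i(k)$; with probability $\gamma$ (event $\mathscr R_{ij}(k)$) sets $x_i(k+1)=(1+S_k)x_i(k)-S_kx_j(k)$, $S_k>0$; $\alpha+\beta+\gamma=1$. Node $j$ updates analogously according to events $\mathscr A_{ji}(k),\mathscr N_{ji}(k),\mathscr R_{ji}(k)$ (possibly dependent on node $i$'s event); other nodes keep their states. Start at time $k_0\ge0$ from $x(k_0)\in\mathbb R^n$. Let $\mathcal H(k)=\max_i x_i(k)-\min_i x_i(k)$. Disagreement divergence is achieved a.s. for an initial value if $\mathbf P(\limsup_{k\to\infty}\mathcal H(k)>M)=1$ for all $M\ge0$. *)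

(* Defs.v *)
From HB Require Import structures.
From mathcomp Require Import all_boot all_order all_algebra.
From mathcomp Require Import all_classical all_reals all_analysis.
Set Implicit Arguments. Unset Strict Implicit. Unset Printing Implicit Defensive.
Import Order.TTheory GRing.Theory Num.Theory.
Import numFieldNormedType.Exports.
Local Open Scope ring_scope.

(* The three possible local events for a selected node:
   Att = attraction (event A), Neu = neglect (event N), Rep = repulsion (event R). *)
Inductive gev := Att | Neu | Rep.

Section Gossip.
Variable R : realType.

Definition gev_prob (alpha beta gamma : R) (e : gev) : R :=
  match e with Att => alpha | Neu => beta | Rep => gamma end.

Definition node_update (Tk Sk : R) (e : gev) (xi xj : R) : R :=
  match e with
  | Att => (1 - Tk) * xi + Tk * xj
  | Neu => xi
  | Rep => (1 + Sk) * xi - Sk * xj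
  end.

Definition gossip_step n (Tk Sk : R) (sel : 'I_n * 'I_n * gev * gev)
    (x : 'I_n -> R) : 'I_n -> R :=
  let: (i, j, ei, ej) := sel in
  fun l => if l == i then node_update Tk Sk ei (x i) (x j)
           else if l == j then node_update Tk Sk ej (x j) (x i)
           else x l.

(* max_i x_i and min_i x_i (computed in the extended reals, then projected;
   for n > 0 these are the usual maximum and minimum) *)
Definition vmax n (x : 'I_n -> R) : R := fine (\big[Order.max/-oo%E]_(i < n) (x i)%:E).
Definition vmin n (x : 'I_n -> R) : R := fine (\big[Order.min/+oo%E]_(i < n) (x i)%:E).

Definition Hdis n (x : 'I_n -> R) : R := vmax x - vmin x.

End Gossip.

(* Main.v *)
Require Import Defs.
From HB Require Import structures.
From mathcomp Require Import all_boot all_order all_algebra.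
From mathcomp Require Import all_classical all_reals all_analysis.
From mathcomp Require Import lra.
Import Order.TTheory GRing.Theory Num.Theory.
Import numFieldNormedType.Exports.
Local Open Scope classical_set_scope.
Local Open Scope ring_scope.

Section H.
Set Implicit Arguments.
Variable R : realType.

Lemma bigmax_fin n (x : 'I_n -> R) (i : 'I_n) :
  (\big[Order.max/-oo%E]_(j < n) (x j)%:E) \is a fin_num.
Proof.
rewrite fin_numE; apply/andP; split.
  apply/eqP => h; have := le_bigmax (-oo%E) (fun j => (x j)%:E) i.
  by rewrite h.
rewrite lt_eqF //; apply: bigmax_lt; [by rewrite ltNye|move=> j _; exact: ltry].
Qed.

Lemma bigmin_fin n (x : 'I_n -> R) (i : 'I_n) :
  (\big[Order.min/+oo%E]_(j < n) (x j)%:E) \is a fin_num.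
Proof.
rewrite fin_numE; apply/andP; split; last first.
  apply/eqP => h; have := bigmin_le (+oo%E) i (fun j => (x j)%:E).
  by rewrite h.
rewrite gt_eqF //; apply: lt_bigmin; [by rewrite ltNye|move=> j _; exact: ltNyr].
Qed.

Lemma vmax_ub n (x : 'I_n -> R) i : x i <= vmax x.
Proof.
rewrite -lee_fin /vmax fineK; last exact: bigmax_fin i.
exact: le_bigmax.
Qed.

Lemma vmin_lb n (x : 'I_n -> R) i : vmin x <= x i.
Proof.
rewrite -lee_fin /vmin fineK; last exact: bigmin_fin i.
exact: bigmin_le.
Qed.

Lemma vmax_le n (x : 'I_n -> R) b : (0 < n)%N -> (forall i, x i <= b) -> vmax x <= b.
Proof.
move=> n0 hb; rewrite -lee_fin /vmax fineK; last exact: bigmax_fin (Ordinal n0).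
apply: bigmax_le => [|i _]; first exact: leNye; rewrite lee_fin; exact: hb.
Qed.

Lemma vmin_ge n (x : 'I_n -> R) b : (0 < n)%N -> (forall i, b <= x i) -> b <= vmin x.
Proof.
move=> n0 hb; rewrite -lee_fin /vmin fineK; last exact: bigmin_fin (Ordinal n0).
apply: le_bigmin => [|i _]; first exact: leey; rewrite lee_fin; exact: hb.
Qed.


Lemma nu_bnd (T S : R) e a b xi xj : 0 < T <= 1 -> 0 < S ->
  a <= xi <= b -> a <= xj <= b ->
  a - S * (b - a) <= node_update T S e xi xj <= b + S * (b - a).
Proof.
move=> /andP[T0 T1] S0 /andP[a1 b1] /andP[a2 b2].
case: e => /=; apply/andP; split; nra.
Qed.

Lemma Hdis_ge0 n (x : 'I_n -> R) : (0 < n)%N -> 0 <= Hdis x.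
Proof.
move=> n0; rewrite /Hdis subr_ge0; have h1 := vmin_lb x (Ordinal n0); have h2 := vmax_ub x (Ordinal n0); lra.
Qed.

Lemma step_bnd n (T S : R) sel (x : 'I_n -> R) : (0 < n)%N -> 0 < T <= 1 -> 0 < S ->
  Hdis (gossip_step T S sel x) <= (1 + 2 * S) * Hdis x.
Proof.
move=> n0 hT hS.
have hx l : vmin x <= x l <= vmax x by rewrite vmin_lb vmax_ub.
have hb : forall l, vmin x - S * (vmax x - vmin x) <= gossip_step T S sel x l
                    <= vmax x + S * (vmax x - vmin x).
  case: sel => [[[i j] ei] ej] l /=.
  case: (l == i); first exact: nu_bnd.
  case: (l == j); first exact: nu_bnd.
  have := hx l; move=> /andP[h1 h2]; apply/andP; split.
    have := Hdis_ge0 x n0; rewrite /Hdis => h; nra.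
  have := Hdis_ge0 x n0; rewrite /Hdis => h; nra.
have h1 := vmax_le _ _ n0 (fun l => proj2 (andP (hb l))).
have h2 := vmin_ge _ _ n0 (fun l => proj1 (andP (hb l))).
rewrite /Hdis; lra.
Qed.

End H.

Theorem theorem2
  (R : realType) (n : nat) (A : 'M[R]_n)
  (alpha beta gamma : R) (Tw S : nat -> R)
  (q : gev -> gev -> R)
  (d : measure_display) (Omega : measurableType d) (P : probability Omega R)
  (Y : nat -> Omega -> 'I_n * 'I_n * gev * gev)
  (x : nat -> Omega -> 'I_n -> R) (k0 : nat) (x0 : 'I_n -> R) :
  (3 <= n)%N ->
  (* A is stochastic *)
  (forall i j, 0 <= A i j) ->
  (forall i, \sum_(j < n) A i j = 1) ->
  (* event probabilities *)
  0 <= alpha -> 0 <= beta -> 0 <= gamma -> alpha + beta + gamma = 1 ->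
  (* step sizes *)
  (forall k, 0 < Tw k <= 1) ->
  (forall k, 0 < S k) ->
  (* joint law of the events of nodes i and j (same for every time and every
     selected pair), each node's event having law (alpha, beta, gamma) *)
  (forall e1 e2, 0 <= q e1 e2) ->
  (forall e1, q e1 Att + q e1 Neu + q e1 Rep = gev_prob alpha beta gamma e1) ->
  (forall e2, q Att e2 + q Neu e2 + q Rep e2 = gev_prob alpha beta gamma e2) ->
  (* Y k = (selected i, selected j, event of i, event of j) at time k *)
  (forall k v, measurable [set w | Y k w = v]) ->
  (forall k i j e1 e2,
      P [set w | Y k w = (i, j, e1, e2)] = ((A i j / n%:R) * q e1 e2)%:E) ->
  (* the selections/events at different times are mutually independent *)
  (forall (s : seq nat) (f : nat -> 'I_n * 'I_n * gev * gev), uniq s ->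
      P (\bigcap_(t in [set` s]) [set w | Y t w = f t])
      = (\prod_(t <- s) P [set w | Y t w = f t])%E) ->
  (* the state process, started at time k0 from x0 *)
  (forall w, x k0 w = x0) ->
  (forall k w, (k0 <= k)%N -> x k.+1 w = gossip_step (Tw k) (S k) (Y k w) (x k w)) ->
  (* disagreement divergence is achieved almost surely *)
  (forall M : R, 0 <= M ->
      P [set w | (M%:E < limn_esup (fun k => (Hdis (x k w))%:E))%E] = 1%E) ->
  (fun N => \prod_(0 <= k < N) (1 + 2 * S k)) @ \oo --> +oo.
Proof.
Proof.
move=> n3 A0 A1 a0 b0 g0 abg Tw01 S0 q0 q1 q2 Ymeas YP Yind xk0 xstep Hdiv.
have n0 : (0 < n)%N by apply: leq_trans n3.
set p := fun N => \prod_(0 <= k < N) (1 + 2 * S k).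
have pS N : p N.+1 = p N * (1 + 2 * S N) by rewrite /p big_nat_recr.
have p1 N : 1 <= p N.
  elim: N => [|N IH]; first by rewrite /p big_geq.
  rewrite pS; have := S0 N; nra.
have pmono N m : (N <= m)%N -> p N <= p m.
  move=> /subnK <-; elim: (m - N)%N => [|k IH]; first by rewrite add0n.
  rewrite addSn pS; have := S0 (k + N)%N; have := p1 (k + N)%N; nra.
apply/cvgryPgt => B.
case: (pselect (exists N, B < p N)) => [[N hN]|nex].
  exists N => // m /= hm; exact: lt_le_trans hN (pmono _ _ hm).
exfalso.
have pB N : p N <= B by rewrite leNgt; apply/negP => h; apply: nex; exists N.
have H0ge : 0 <= Hdis x0 by exact: Hdis_ge0.
have bnd j w : Hdis (x (j + k0)%N w) * p k0 <= Hdis x0 * p (j + k0)%N.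
  elim: j => [|j IH]; first by rewrite add0n xk0.
  rewrite addSn xstep ?leq_addl // pS.
  have h := @step_bnd R n (Tw (j + k0)%N) (S (j + k0)%N) (Y (j + k0)%N w) (x (j + k0)%N w) n0 (Tw01 _) (S0 (j + k0)%N).
  have := p1 k0; have := S0 (j + k0)%N; have := Hdis_ge0 _ (x (j + k0)%N w) n0.
  nra.
set M := Num.max 0 (Hdis x0 * B / p k0).
have hM k w : (k0 <= k)%N -> Hdis (x k w) <= M.
  move=> /subnK <-; rewrite le_max; apply/orP; right.
  have pk0 : 0 < p k0 by apply: lt_le_trans (p1 k0).
  rewrite ler_pdivlMr //; apply: le_trans (bnd _ w) _.
  by apply: ler_wpM2l => //.
have := Hdiv M (ltac:(by rewrite le_max lexx)).
suff -> : [set w | (M%:E < limn_esup (fun k => (Hdis (x k w))%:E))%E] = set0.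
  by rewrite measure0 => /eqP; rewrite eqe eq_sym oner_eq0.
apply/seteqP; split => // w /=; rewrite ltNge => /negP; apply.
rewrite /limn_esup /limf_esup; apply: ge_ereal_inf.
exists (ereal_sup ((fun k => (Hdis (x k w))%:E) @` [set k | (k0 <= k)%N])).
  by exists [set k | (k0 <= k)%N] => //; exists k0.
apply: ge_ereal_sup => _ [k hk <-]; rewrite lee_fin; exact: hM.
Qed.
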